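(* Let $\Gamma$ be a metrized graph with $v$ vertices. Then $$(v-2)\, r(\Gamma)= \sum_{e_i \in E(\Gamma)} \frac{R_i}{L_i+R_i}\, r(\overline{\Gamma}_i),\qquad\text{where } r(\Gamma):=\sum_{e_i \in E(\Gamma)}\frac{L_i R_i}{L_i+R_i}.$$
   Context: A metrized graph $\Gamma$ is a finite connected graph (multiple edges and self-loops allowed) each of whose edges is identified with a closed segment of positive length, with a finite nonempty vertex set $V(\Gamma)$ containing every point of valence $\neq2$; $v=\#V(\Gamma)$, $E(\Gamma)$ its edge set, $L_i$ the length of $e_i$. For an edge $e_i$ with end points $p_i,q_i$, $R_i$ is the effective resistance between $p_i$ and $q_i$ in $\Gamma-e_i$ (interior of $e_i$ deleted; edges as resistors of resistance equal to length); $R_i=0$ for a self-loop; if $e_i$ is a bridge, every expression involving $R_i$ is interpreted as its limit as $R_i\to\infty$ (so its term in $r(\Gamma)$ is $L_i$ and $R_i/(L_i+R_i)=1$). $\overline\Gamma_i$ is the metrized graph obtained by contracting $e_i$ to a point, with vertex set the image of $V(\Gamma)$; $r(\overline\Gamma_i)$ is computed in $\overline\Gamma_i$. *)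

(* Defs.v *)
From HB Require Import structures.
From mathcomp Require Import all_boot all_order all_algebra.
From mathcomp Require Import boolp reals.
Set Implicit Arguments. Unset Strict Implicit. Unset Printing Implicit Defensive.
Import Order.TTheory GRing.Theory Num.Theory.
Local Open Scope ring_scope.

(* A metrized graph is encoded combinatorially by its model: a vertex set
   [verts] (inside an ambient finite type V), a set of edges [edges]
   (inside an ambient finite type E), endpoints [src e], [tgt e] and lengths
   [len e].  Multiple edges and self-loops are allowed. *)
Record mgraph (V E : finType) (R : realType) := MGraph {
  verts : {set V};
  edges : {set E};
  src : E -> V;
  tgt : E -> V;
  len : E -> R }.

Section MGraph.
Variables (V E : finType) (R : realType).
Implicit Types (G : mgraph V E R).

Definition adj G : rel V := fun x y =>
  [exists e in edges G,
     ((src G e == x) && (tgt G e == y)) || ((src G e == y) && (tgt G e == x))].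

Definition is_mgraph G : Prop :=
  [/\ verts G != set0,
      (forall e, e \in edges G -> src G e \in verts G /\ tgt G e \in verts G),
      (forall e, e \in edges G -> 0 < len G e) &
      (forall x y, x \in verts G -> y \in verts G -> connect (adj G) x y)].

Definition delete_edge G (e0 : E) : mgraph V E R :=
  MGraph (verts G) (edges G :\ e0) (src G) (tgt G) (len G).

Definition contract_edge G (e0 : E) : mgraph V E R :=
  let p := src G e0 in let q := tgt G e0 in
  let rl := fun x => if x == q then p else x in
  MGraph (if p == q then verts G else verts G :\ q)
         (edges G :\ e0) (fun e => rl (src G e)) (fun e => rl (tgt G e))
         (len G).

(* Kirchhoff's laws: f is a potential for a unit current entering at a and
   leaving at b, each edge being a resistor of resistance equal to its length *)
Definition kirchhoff G (a b : V) (f : V -> R) : Prop :=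
  forall x, x \in verts G ->
    \sum_(e in edges G | src G e == x) (f x - f (tgt G e)) / len G e
  + \sum_(e in edges G | tgt G e == x) (f x - f (src G e)) / len G e
  = (x == a)%:R - (x == b)%:R.

(* effective resistance between a and b: [Some (f a - f b)] for a Kirchhoff
   potential f when a and b are connected, and [None] (= +infinity) when they
   lie in different components. *)
Definition eff_res G (a b : V) : option R :=
  if connect (adj G) a b then
    match pselect (exists f, kirchhoff G a b f) with
    | left H => Some (let f := projT1 (cid H) in f a - f b)
    | right _ => None
    end
  else None.

Definition R_edge G (e : E) : option R :=
  eff_res (delete_edge G e) (src G e) (tgt G e).

(* L R / (L + R), interpreted as its limit L when R = +infinity *)
Definition par_term (L : R) (oR : option R) : R :=
  if oR is Some r then L * r / (L + r) else L.

(* R / (L + R), interpreted as its limit 1 when R = +infinity *)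
Definition ratio_term (L : R) (oR : option R) : R :=
  if oR is Some r then r / (L + r) else 1.

Definition r_const G : R :=
  \sum_(e in edges G) par_term (len G e) (R_edge G e).

End MGraph.

(* Main.v *)
Require Import Defs.
From HB Require Import structures.
From mathcomp Require Import all_boot all_order all_algebra.
From mathcomp Require Import boolp reals.
From mathcomp Require Import ring lra.
Set Implicit Arguments. Unset Strict Implicit. Unset Printing Implicit Defensive.
Import Order.TTheory GRing.Theory Num.Theory.
Local Open Scope ring_scope.

Section S.
Variables (V E : finType) (R : realType).
Implicit Types (G : mgraph V E R).

Definition wf G := (forall e, e \in edges G -> src G e \in verts G /\ tgt G e \in verts G)
   /\ (forall e, e \in edges G -> 0 < len G e).

Definition term G (f : V -> R) x e : R :=
  ((src G e == x)%:R * (f x - f (tgt G e)) + (tgt G e == x)%:R * (f x - f (src G e))) / len G e.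

Definition Ksum G f x := \sum_(e in edges G) term G f x e.

Lemma KsumE G f x :
  \sum_(e in edges G | src G e == x) (f x - f (tgt G e)) / len G e
  + \sum_(e in edges G | tgt G e == x) (f x - f (src G e)) / len G e = Ksum G f x.
Proof.
rewrite /Ksum /term !big_mkcondr -big_split /=.
apply: eq_bigr => e _; case: (src G e == x); case: (tgt G e == x); rewrite /=; ring.
Qed.

Lemma kirchhoffE G a b f : kirchhoff G a b f <->
  (forall x, x \in verts G -> Ksum G f x = (x == a)%:R - (x == b)%:R).
Proof. by split => H x Hx; rewrite -?KsumE ?H // KsumE H. Qed.


Lemma sum_delta (T : finType) (S : {pred T}) a (F : T -> R) :
  a \in S -> \sum_(x in S) (a == x)%:R * F x = F a.
Proof.
move=> aS; rewrite (bigD1 a) //= eqxx mul1r big1 ?addr0 // => x /andP[_ /negPf].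
by rewrite eq_sym => ->; rewrite mul0r.
Qed.

Lemma sum_delta' (T : finType) (S : {pred T}) a (F : T -> R) :
  a \in S -> \sum_(x in S) (x == a)%:R * F x = F a.
Proof.
move=> aS; rewrite -(sum_delta F aS); apply: eq_bigr => x _; by rewrite eq_sym.
Qed.

Lemma swap_end G (s : E -> V) (F : V -> E -> R) :
  (forall e, e \in edges G -> s e \in verts G) ->
  \sum_(x in verts G) \sum_(e in edges G) (s e == x)%:R * F x e =
  \sum_(e in edges G) F (s e) e.
Proof.
move=> H; rewrite exchange_big /=; apply: eq_bigr => e He.
by rewrite sum_delta // H.
Qed.

Definition En G (f h : V -> R) :=
  \sum_(e in edges G) (f (src G e) - f (tgt G e)) * (h (src G e) - h (tgt G e)) / len G e.

Lemma En_sym G f h : En G f h = En G h f.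
Proof. by apply: eq_bigr => e _; rewrite (mulrC (f _ - _)). Qed.

Lemma green G h f : wf G ->
  \sum_(x in verts G) h x * Ksum G f x = En G h f.
Proof.
move=> [Hv _].
have -> : \sum_(x in verts G) h x * Ksum G f x =
  \sum_(x in verts G) \sum_(e in edges G) (src G e == x)%:R *
      (h x * (f x - f (tgt G e)) / len G e)
  + \sum_(x in verts G) \sum_(e in edges G) (tgt G e == x)%:R *
      (h x * (f x - f (src G e)) / len G e).
  rewrite -big_split /=; apply: eq_bigr => x _.
  rewrite /Ksum mulr_sumr -big_split /=; apply: eq_bigr => e _; rewrite /term; ring.
rewrite (swap_end (fun x e => h x * (f x - f (tgt G e)) / len G e)); last by move=> e /Hv[].
rewrite (swap_end (fun x e => h x * (f x - f (src G e)) / len G e)); last by move=> e /Hv[].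
rewrite /En -big_split /=; apply: eq_bigr => e _; ring.
Qed.

Lemma sum_dd (S : {pred V}) (h : V -> R) a b : a \in S -> b \in S ->
  \sum_(x in S) h x * ((x == a)%:R - (x == b)%:R) = h a - h b.
Proof.
move=> Ha Hb.
have -> : \sum_(x in S) h x * ((x == a)%:R - (x == b)%:R) =
   \sum_(x in S) (x == a)%:R * h x - \sum_(x in S) (x == b)%:R * h x.
  rewrite -sumrB; apply: eq_bigr => x _; ring.
by rewrite !sum_delta'.
Qed.

Lemma En_kirch G a b f h : wf G -> a \in verts G -> b \in verts G ->
  kirchhoff G a b f -> En G h f = h a - h b.
Proof.
move=> W Ha Hb /kirchhoffE K; rewrite -green //.
rewrite -(sum_dd h Ha Hb); apply: eq_bigr => x Hx; by rewrite K.
Qed.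

Lemma En_ge0 G f : wf G -> 0 <= En G f f.
Proof.
move=> [_ Hl]; apply: sumr_ge0 => e He.
by apply: divr_ge0; [rewrite -expr2 sqr_ge0 | apply: ltW; apply: Hl].
Qed.

Lemma En_eq0 G f : wf G -> En G f f = 0 ->
  forall e, e \in edges G -> f (src G e) = f (tgt G e).
Proof.
move=> [_ Hl] H0 e He.
have /psumr_eq0P H := H0.
have Le := Hl e He.
have := H (fun e' He' => divr_ge0 (sqr_ge0 _) (ltW (Hl e' He'))) e He.
move/eqP; rewrite -expr2 mulf_eq0 invr_eq0 (gt_eqF Le) orbF sqrf_eq0 subr_eq0.
by move/eqP.
Qed.

Lemma adj_sym G : symmetric (adj G).
Proof.
move=> x y; apply/idP/idP => /existsP[e /andP[He H]]; apply/existsP; exists e;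
  by rewrite He /= orbC.
Qed.

Lemma connect_map (T : finType) (h : T -> T) (e e' : rel T) x y :
  (forall u w, e u w -> connect e' (h u) (h w)) -> connect e x y ->
  connect e' (h x) (h y).
Proof.
move=> He /connectP[p pth ->]; elim: p x pth => /= [|z p IH] x; first by rewrite connect0.
move=> /andP[exz /IH]; apply: connect_trans; exact: He.
Qed.

Lemma const_conn G (f : V -> R) x y :
  (forall e, e \in edges G -> f (src G e) = f (tgt G e)) ->
  connect (adj G) x y -> f x = f y.
Proof.
move=> Hf /connectP[p pth ->]; elim: p x pth => //= z p IH x /andP[/existsP[e]].
move=> /andP[He /orP[]/andP[/eqP<- /eqP<-]] /IH <-; by rewrite Hf.
Qed.

Lemma Ksum_lin G (f g : V -> R) a b x :
  Ksum G (fun y => a * f y + b * g y) x = a * Ksum G f x + b * Ksum G g x.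
Proof.
rewrite /Ksum !mulr_sumr -big_split; apply: eq_bigr => e _; rewrite /term /=; ring.
Qed.

Lemma kirch_unique G a b f g : wf G -> kirchhoff G a b f -> kirchhoff G a b g ->
  connect (adj G) a b -> f a - f b = g a - g b.
Proof.
move=> W /kirchhoffE Kf /kirchhoffE Kg C.
pose h y := 1 * f y + (-1) * g y.
have Kh : forall x, x \in verts G -> Ksum G h x = 0.
  by move=> x Hx; rewrite Ksum_lin Kf // Kg //; ring.
have E0 : En G h h = 0.
  by rewrite -green // big1 // => x Hx; rewrite Kh // mulr0.
have := const_conn (En_eq0 W E0) C; rewrite /h; lra.
Qed.


Lemma sum_deltaT (T : finType) z (F : T -> R) :
  \sum_(y : T) F y * (z == y)%:R = F z.
Proof.
rewrite (bigD1 z) //= eqxx mulr1 big1 ?addr0 // => y /negPf.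
by rewrite eq_sym => ->; rewrite mulr0.
Qed.

Definition coef G x y := Ksum G (fun z => (z == y)%:R) x.

Lemma Ksum_expand G f x : Ksum G f x = \sum_(y : V) f y * coef G x y.
Proof.
rewrite /coef /Ksum.
symmetry; under eq_bigr do rewrite mulr_sumr.
rewrite exchange_big /=; apply: eq_bigr => e _.
rewrite /term.
have -> : \sum_(y : V) f y * (((src G e == x)%:R * ((x == y)%:R - (tgt G e == y)%:R) +
   (tgt G e == x)%:R * ((x == y)%:R - (src G e == y)%:R)) / len G e) =
   ((src G e == x)%:R * (\sum_(y : V) f y * (x == y)%:R - \sum_(y : V) f y * (tgt G e == y)%:R) +
   (tgt G e == x)%:R * (\sum_(y : V) f y * (x == y)%:R - \sum_(y : V) f y * (src G e == y)%:R)) / len G e.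
  rewrite -!sumrB !mulr_sumr -big_split mulr_suml; apply: eq_bigr => y _ /=; ring.
by rewrite !sum_deltaT.
Qed.

Definition conn G := forall x y, x \in verts G -> y \in verts G -> connect (adj G) x y.

Lemma exist_kirch G a b : wf G -> conn G -> a \in verts G -> b \in verts G ->
  exists f, kirchhoff G a b f.
Proof.
move=> W C Ha Hb.
set o := a.
pose d x y := if (x \in verts G) && (x != o) then coef G x y else (x == y)%:R.
have Td : forall (f : V -> R) x, \sum_(y : V) f y * d x y =
    if (x \in verts G) && (x != o) then Ksum G f x else f x.
  move=> f x; rewrite /d; case: ifP => _; first by rewrite Ksum_expand.
  by rewrite sum_deltaT.
pose n := #|V|.
pose M : 'M[R]_n := \matrix_(i < n, j < n) d (enum_val j) (enum_val i).
have Mu : forall u : 'rV[R]_n, forall j, (u *m M) 0 j =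
    \sum_(y : V) u 0 (enum_rank y) * d (enum_val j) y.
  move=> u j; rewrite !mxE (reindex enum_rank) /=; last first.
    by apply: onW_bij; exact: enum_rank_bij.
  by apply: eq_bigr => y _; rewrite !mxE enum_rankK.
have inj : forall u : 'rV[R]_n, u *m M = 0 -> u = 0.
  move=> u uM; pose f : V -> R := fun y => u 0 (enum_rank y).
  have Tf : forall x, (if (x \in verts G) && (x != o) then Ksum G f x else f x) = 0.
    move=> x; rewrite -Td -(enum_rankK x) -Mu uM mxE //.
  have fo : f o = 0 by have := Tf o; rewrite eqxx /= andbF.
  have E0 : En G f f = 0.
    rewrite -green // big1 // => x Hx; have := Tf x; rewrite Hx /=.
    case: (eqVneq x o) => [->|Hxo] /=; first by rewrite fo mul0r. by move=> ->; rewrite mulr0.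
  have f0 : forall x, f x = 0.
    move=> x; have := Tf x; case: (boolP (x \in verts G)) => Hx /=; last by [].
    move=> _; rewrite -fo; apply: const_conn (En_eq0 W E0) _; exact: C.
  apply/rowP => j; rewrite mxE -(enum_valK j); exact: f0.
have MU : M \in unitmx.
  rewrite -row_free_unit -kermx_eq0; apply/eqP/row_matrixP => i; rewrite row0.
  apply: inj; apply/sub_kermxP; exact: row_sub.
pose d0 x : R := if (x \in verts G) && (x != o) then (x == a)%:R - (x == b)%:R else 0.
pose w : 'rV[R]_n := \row_j d0 (enum_val j).
pose u := w *m invmx M.
have uM : u *m M = w by rewrite /u mulmxKV.
pose f : V -> R := fun y => u 0 (enum_rank y).
have Kf : forall x, x \in verts G -> x != o -> Ksum G f x = (x == a)%:R - (x == b)%:R.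
  move=> x Hx Hxo; have := Td f x; rewrite Hx Hxo /= => <-.
  rewrite -(enum_rankK x) -Mu uM mxE enum_rankK /d0 Hx Hxo //.
exists f; apply/kirchhoffE => x Hx.
case: (eqVneq x o) => [->|Hxo]; last by rewrite Kf // (negPf Hxo).
have S0 : \sum_(x in verts G) Ksum G f x = 0.
  have E1 : En G (fun=> (1 : R)) f = 0 by apply: big1 => e _; rewrite subrr !mul0r.
  have := green (fun=> (1 : R)) f W; rewrite E1 => H; rewrite -[RHS]H.
  by apply: eq_bigr => y _; rewrite mul1r.
have S1 : \sum_(x in verts G) ((x == a)%:R - (x == b)%:R) = (0 : R).
  have := sum_dd (fun=> (1 : R)) Ha Hb; rewrite subrr => H; rewrite -[RHS]H.
  by apply: eq_bigr => y _; rewrite mul1r.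
rewrite (bigD1 o) //= in S0; rewrite (bigD1 o) //= in S1.
rewrite (eq_bigr (fun x => (x == a)%:R - (x == b)%:R)) in S0; last by move=> y /andP[Hy Hyo]; rewrite Kf.
move: S0 S1; set X := \sum_(i in _ | _) _; move=> S0 S1.
rewrite eqxx in S1; lra.
Qed.


Lemma termE G f x e : term G f x e =
  ((x == src G e)%:R - (x == tgt G e)%:R) * (f (src G e) - f (tgt G e)) / len G e.
Proof.
rewrite /term (eq_sym x) (eq_sym x).
case: (eqVneq (src G e) x) => [E1|N1]; case: (eqVneq (tgt G e) x) => [E2|N2] /=.
- rewrite E1 E2; ring.
- rewrite E1; ring.
- rewrite E2; ring.
- ring.
Qed.

Lemma wf_del G j : wf G -> wf (delete_edge G j).
Proof.
by move=> [H1 H2]; split => e /setD1P[_ He]; [apply: H1 | apply: H2].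
Qed.

Lemma Ksum_del G j f x : j \in edges G ->
  Ksum G f x = term G f x j + Ksum (delete_edge G j) f x.
Proof. by move=> Hj; rewrite /Ksum (big_setD1 j Hj). Qed.

Lemma del_conn G j : wf G -> conn G -> j \in edges G ->
  connect (adj (delete_edge G j)) (src G j) (tgt G j) -> conn (delete_edge G j).
Proof.
move=> W C Hj Hc x y Hx Hy; have := C x y Hx Hy; apply: connect_sub => u w.
have Csym := sym_connect_sym (adj_sym (delete_edge G j)).
case/existsP => e /andP[He Hor]; case: (eqVneq e j) => [Eej|Nej].
  subst e; case/orP: Hor => /andP[/eqP<- /eqP<-] //; by rewrite Csym.
apply: connect1; apply/existsP; exists e; rewrite /= in_setD1 Nej He /=; exact: Hor.
Qed.

Lemma par_lemma G j f : wf G -> conn G -> j \in edges G ->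
  kirchhoff G (src G j) (tgt G j) f ->
  par_term (len G j) (R_edge G j) = f (src G j) - f (tgt G j).
Proof.
move=> W C Hj Kf.
have [Hp Hq] := W.1 j Hj; have L0 := W.2 j Hj.
have Cpq := C _ _ Hp Hq.
set p := src G j in Hp Hq Kf Cpq *; set q := tgt G j in Hp Hq Kf Cpq *.
set L := len G j in L0 *.
set G' := delete_edge G j.
have W' : wf G' by apply: wf_del.
rewrite /R_edge /eff_res -/p -/q -/G'.
case: (boolP (connect (adj G') p q)) => Hc.
  have C' := del_conn W C Hj Hc.
  have [g Kg] := exist_kirch W' C' Hp Hq.
  case: pselect => [H|H]; last by exfalso; apply: H; exists g.
  rewrite /=.
  set g' := projT1 (cid H); have Kg' : kirchhoff G' p q g' := projT2 (cid H).
  set r := g' p - g' q.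
  have r0 : 0 <= r by rewrite /r -(En_kirch g' W' Hp Hq Kg'); apply: En_ge0.
  have Lr : L + r != 0 by rewrite gt_eqF // ltr_wpDr.
  pose f' y := L / (L + r) * g' y.
  have Kf' : kirchhoff G p q f'.
    apply/kirchhoffE => x Hx.
    rewrite (Ksum_del _ _ Hj) termE.
    have -> : Ksum G' f' x = L / (L + r) * Ksum G' g' x.
      rewrite /Ksum mulr_sumr; apply: eq_bigr => e _; rewrite !termE /f'; ring.
    move/kirchhoffE: Kg' => ->; last by [].
    rewrite -/p -/q -/L /f' -/r.
    have -> : L / (L + r) * g' p - L / (L + r) * g' q = L / (L + r) * r by rewrite /r; ring.
    by field; rewrite Lr (gt_eqF L0).
  rewrite (kirch_unique W Kf Kf' Cpq) /f'.
  rewrite -/r; have -> : L / (L + r) * g' p - L / (L + r) * g' q = L / (L + r) * r by rewrite /r; ring.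
  by rewrite mulrAC.
pose f' y := L * (connect (adj G') p y)%:R.
have Kf' : kirchhoff G p q f'.
  apply/kirchhoffE => x Hx.
  rewrite (Ksum_del _ _ Hj) termE.
  have -> : Ksum G' f' x = 0.
    apply: big1 => e He; rewrite termE.
    have Ha : adj G' (src G' e) (tgt G' e) by apply/existsP; exists e; rewrite He !eqxx.
    have -> : f' (src G e) = f' (tgt G e).
      rewrite /f'; suff -> : connect (adj G') p (src G e) = connect (adj G') p (tgt G e) by [].
      apply/idP/idP => H1; apply: (connect_trans H1).
        exact: connect1.
      rewrite (sym_connect_sym (adj_sym G')); exact: connect1.
    by rewrite subrr mulr0 mul0r.
  rewrite -/p -/q -/L /f' connect0 (negPf Hc).
  have pq : p != q by apply: contraNneq Hc => ->; rewrite connect0.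
  case: (eqVneq x p) => [->|xp]; first by rewrite (negPf pq) /=; field; rewrite (gt_eqF L0).
  case: (eqVneq x q) => [Exq|xq] /=; last by ring.
  by field; rewrite (gt_eqF L0).
rewrite (kirch_unique W Kf Kf' Cpq) /f' connect0 (negPf Hc) /=; ring.
Qed.


Section Contract.
Variables (G : mgraph V E R) (i : E).
Hypotheses (W : wf G) (C : conn G) (Hi : i \in edges G) (pq : src G i != tgt G i).
Let p := src G i.
Let q := tgt G i.
Let Gc := contract_edge G i.
Let rl x := if x == q then p else x.

Lemma Gc_verts : verts Gc = verts G :\ q.
Proof. by rewrite /Gc /contract_edge /= (negPf pq). Qed.

Lemma Gc_src e : src Gc e = rl (src G e). Proof. by []. Qed.
Lemma Gc_tgt e : tgt Gc e = rl (tgt G e). Proof. by []. Qed.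
Lemma Gc_edges : edges Gc = edges G :\ i. Proof. by []. Qed.

Lemma rl_in x : x \in verts G -> rl x \in verts Gc.
Proof.
move=> Hx; rewrite Gc_verts /rl; case: (eqVneq x q) => [_|xq]; rewrite in_setD1.
  by rewrite pq (W.1 i Hi).1.
by rewrite xq Hx.
Qed.

Lemma Gc_wf : wf Gc.
Proof.
split => e; rewrite Gc_edges => /setD1P[_ He].
  by rewrite Gc_src Gc_tgt; have [H1 H2] := W.1 e He; split; apply: rl_in.
exact: W.2 e He.
Qed.

Lemma Gc_conn : conn Gc.
Proof.
move=> x y; rewrite Gc_verts => /setD1P[xq Hx] /setD1P[yq Hy].
have -> : x = rl x by rewrite /rl (negPf xq).
have -> : y = rl y by rewrite /rl (negPf yq).
apply: connect_map (C Hx Hy) => u w /existsP[e /andP[He Hor]].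
case: (eqVneq e i) => [Eei|Nei].
  subst e; have Hrl : rl p = rl q by rewrite /rl eqxx (negPf pq).
  case/orP: Hor => /andP[/eqP<- /eqP<-]; rewrite -/p -/q Hrl; exact: connect0.
apply: connect1; apply/existsP; exists e; rewrite Gc_edges in_setD1 Nei He /=.
by case/orP: Hor => /andP[/eqP<- /eqP<-]; rewrite /rl !eqxx ?orbT.
Qed.

Lemma Ksum_Gc f x : f p = f q -> x != q ->
  Ksum Gc f x = Ksum G f x + (x == p)%:R * Ksum G f q.
Proof.
move=> fpq xq.
have frl : forall y, f (rl y) = f y by move=> y; rewrite /rl; case: eqP => // ->.
have eqrl : forall y, (x == rl y)%:R = (x == y)%:R + (x == p)%:R * (y == q)%:R :> R.
  move=> y; rewrite /rl; case: (eqVneq y q) => [->|yq]; first by rewrite (negPf xq) /=; ring.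
  by rewrite /= mulr0 addr0.
have t0 : forall z, term G f z i = 0 by move=> z; rewrite termE -/p -/q fpq subrr mulr0 mul0r.
rewrite (Ksum_del _ _ Hi) (Ksum_del f q Hi) !t0 !add0r /Ksum mulr_sumr -big_split.
apply: eq_bigr => e _; rewrite !termE Gc_src Gc_tgt !frl !eqrl (eq_sym (src G e)) (eq_sym (tgt G e)).
rewrite /=; ring.
Qed.

Lemma eqrl x y : x != q -> (x == rl y)%:R = (x == y)%:R + (x == p)%:R * (y == q)%:R :> R.
Proof.
move=> xq; rewrite /rl; case: (eqVneq y q) => [->|yq]; first by rewrite (negPf xq) /=; ring.
by rewrite /= mulr0 addr0.
Qed.

Lemma short j fi fj : j \in edges G -> j != i ->
  kirchhoff G p q fi -> kirchhoff G (src G j) (tgt G j) fj -> fi p - fi q != 0 ->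
  par_term (len G j) (R_edge Gc j) =
  (fj (src G j) - fj (tgt G j)) - (fj p - fj q) * (fi (src G j) - fi (tgt G j)) / (fi p - fi q).
Proof.
move=> Hj ji Kfi Kfj Y0.
set Y := fi p - fi q in Y0 *.
set c := (fj p - fj q) / Y.
pose psi y := 1 * fj y + (- c) * fi y.
have ppq : psi p = psi q by rewrite /psi /c; apply/eqP; rewrite -subr_eq0; apply/eqP; rewrite /Y; field.
have prl : forall y, psi (rl y) = psi y by move=> y; rewrite /rl; case: eqP => // ->.
have Hq : q \in verts G := (W.1 i Hi).2.
have Kpsi : kirchhoff Gc (src Gc j) (tgt Gc j) psi.
  apply/kirchhoffE => x; rewrite Gc_verts => /setD1P[xq Hx].
  rewrite Ksum_Gc // !Ksum_lin.
  move/kirchhoffE: Kfi => Kfi; move/kirchhoffE: Kfj => Kfj.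
  rewrite Kfi // Kfj // Kfi // Kfj // Gc_src Gc_tgt !eqrl // (negPf xq) eqxx.
  rewrite (eq_sym q p) (negPf pq) (eq_sym q (src G j)) (eq_sym q (tgt G j)) /=; ring.
have Hjc : j \in edges Gc by rewrite Gc_edges in_setD1 ji.
rewrite (par_lemma Gc_wf Gc_conn Hjc Kpsi) Gc_src Gc_tgt !prl /psi /c; by field.
Qed.

End Contract.


Lemma foster G (phi : E -> V -> R) : wf G -> conn G -> verts G != set0 ->
  (forall e, e \in edges G -> kirchhoff G (src G e) (tgt G e) (phi e)) ->
  \sum_(e in edges G) (phi e (src G e) - phi e (tgt G e)) / len G e = #|verts G|%:R - 1.
Proof.
move=> W C /set0Pn[o Ho] Kphi.
have ex : forall x, exists g, x \in verts G -> kirchhoff G x o g.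
  move=> x; case: (boolP (x \in verts G)) => Hx; last by exists (fun=> 0).
  by have [g Kg] := exist_kirch W C Hx Ho; exists g.
pose gg x := projT1 (cid (ex x)).
have Kgg : forall x, x \in verts G -> kirchhoff G x o (gg x) := fun x => projT2 (cid (ex x)).
have Ye : forall e, e \in edges G -> phi e (src G e) - phi e (tgt G e) =
   (gg (src G e) (src G e) - gg (src G e) (tgt G e)) - (gg (tgt G e) (src G e) - gg (tgt G e) (tgt G e)).
  move=> e He; have [Hs Ht] := W.1 e He.
  pose g' y := 1 * gg (src G e) y + (-1) * gg (tgt G e) y.
  have Kg' : kirchhoff G (src G e) (tgt G e) g'.
    apply/kirchhoffE => x Hx; rewrite Ksum_lin.
    move/kirchhoffE: (Kgg _ Hs) => K1; move/kirchhoffE: (Kgg _ Ht) => K2; rewrite K1 // K2 //; ring.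
  rewrite (kirch_unique W (Kphi e He) Kg' (C _ _ Hs Ht)) /g'; ring.
have S1 : \sum_(x in verts G) Ksum G (gg x) x = #|verts G|%:R - 1.
  transitivity (\sum_(x in verts G) (1 - (o == x)%:R * 1) : R).
    by apply: eq_bigr => x Hx; move/kirchhoffE: (Kgg x Hx) => -> //; rewrite eqxx (eq_sym x) /= mulr1.
  by rewrite sumrB sum_delta // sumr_const.
rewrite -S1.
transitivity (\sum_(x in verts G) \sum_(e in edges G) (src G e == x)%:R *
   ((gg x (src G e) - gg x (tgt G e)) / len G e) -
   \sum_(x in verts G) \sum_(e in edges G) (tgt G e == x)%:R *
   ((gg x (src G e) - gg x (tgt G e)) / len G e)); last first.
  rewrite -sumrB; apply: eq_bigr => x _; rewrite /Ksum -sumrB; apply: eq_bigr => e _.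
  rewrite termE (eq_sym x) (eq_sym x); ring.
rewrite (swap_end (fun x e => (gg x (src G e) - gg x (tgt G e)) / len G e)); last by move=> e /(W.1)[].
rewrite (swap_end (fun x e => (gg x (src G e) - gg x (tgt G e)) / len G e)); last by move=> e /(W.1)[].
rewrite -sumrB; apply: eq_bigr => e He; rewrite Ye //; ring.
Qed.

End S.

Unset Implicit Arguments.

Theorem theorem3p8 (R : realType) (V E : finType) (G : mgraph V E R) :
  is_mgraph G ->
  (#|verts G|%:R - 2) * r_const G =
  \sum_(e in edges G)
     ratio_term (len G e) (R_edge G e) * r_const (contract_edge G e).
Proof.
case=> Hne H1 H2 H3.
have W : wf G by [].
have C : conn G by [].
have ex : forall e, exists f, e \in edges G -> kirchhoff G (src G e) (tgt G e) f.
  move=> e; case: (boolP (e \in edges G)) => He; last by exists (fun=> 0).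
  by have [Hs Ht] := H1 e He; have [f Kf] := exist_kirch W C Hs Ht; exists f.
pose phi e := projT1 (cid (ex e)).
have Kphi : forall e, e \in edges G -> kirchhoff G (src G e) (tgt G e) (phi e)
  := fun e => projT2 (cid (ex e)).
pose Y e := phi e (src G e) - phi e (tgt G e).
pose T i j := phi j (src G i) - phi j (tgt G i).
have TY : forall i, T i i = Y i by [].
have F1 : r_const G = \sum_(e in edges G) Y e.
  by apply: eq_bigr => e He; rewrite (par_lemma W C He (Kphi e He)).
have F2 : forall i, i \in edges G -> ratio_term (len G i) (R_edge G i) = Y i / len G i.
  move=> i Hi; have L0 := H2 i Hi.
  rewrite /Y -(par_lemma W C Hi (Kphi i Hi)).
  case: (R_edge G i) => [r|] /=; last by rewrite divff // gt_eqF.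
  by rewrite mulrAC (mulrC (len G i)) mulfK // gt_eqF.
have Tsym : forall i j, i \in edges G -> j \in edges G ->
    T i j = phi i (src G j) - phi i (tgt G j).
  move=> i j Hi Hj; have [Hsi Hti] := H1 i Hi; have [Hsj Htj] := H1 j Hj.
  rewrite /T -(En_kirch (phi j) W Hsi Hti (Kphi i Hi)).
  by rewrite En_sym (En_kirch (phi i) W Hsj Htj (Kphi j Hj)).
have F4 : \sum_(e in edges G) Y e / len G e = #|verts G|%:R - 1.
  exact: (foster W C Hne Kphi).
have F5 : forall j, j \in edges G -> \sum_(i in edges G) T i j * T i j / len G i = Y j.
  move=> j Hj; have [Hs Ht] := H1 j Hj.
  exact: (En_kirch (phi j) W Hs Ht (Kphi j Hj)).
have F6 : forall i j, i \in edges G -> j \in edges G -> Y i = 0 -> T i j = 0.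
  move=> i j Hi Hj Y0; have [Hs Ht] := H1 i Hi.
  have E0 : En G (phi i) (phi i) = 0 by rewrite (En_kirch (phi i) W Hs Ht (Kphi i Hi)).
  by rewrite Tsym // (En_eq0 W E0 Hj) subrr.
have Fi : forall i, i \in edges G ->
    ratio_term (len G i) (R_edge G i) * r_const (contract_edge G i) =
    \sum_(j in edges G) (Y i * Y j - T i j * T i j) / len G i.
  move=> i Hi; rewrite F2 //.
  case: (eqVneq (Y i) 0) => [Y0|Y0].
    rewrite Y0 !mul0r big1 // => j Hj; rewrite F6 //; ring.
  have pq : src G i != tgt G i.
    by apply: contraNneq Y0 => E1; rewrite /Y E1 subrr.
  have -> : r_const (contract_edge G i) =
      \sum_(j in edges G :\ i) (Y j - T i j * T i j / Y i).
    apply: eq_bigr => j /setD1P[ji Hj].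
    rewrite (short W C Hi pq Hj ji (Kphi i Hi) (Kphi j Hj) Y0) /Y /T.
    by rewrite -(Tsym i j Hi Hj).
  rewrite (big_setD1 i Hi) TY subrr mul0r /= add0r mulr_sumr.
  apply: eq_bigr => j _; field; rewrite Y0 gt_eqF //; exact: H2.
rewrite (eq_bigr _ Fi) exchange_big /= F1 mulr_sumr.
apply: eq_bigr => j Hj.
have -> : \sum_(i in edges G) (Y i * Y j - T i j * T i j) / len G i =
   Y j * \sum_(i in edges G) Y i / len G i - \sum_(i in edges G) T i j * T i j / len G i.
  rewrite mulr_sumr -sumrB; apply: eq_bigr => i Hi; field; rewrite gt_eqF //; exact: H2.
rewrite F4 F5 //; ring.
Qed.
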